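(* Let $A\in\mathbb{R}^{n\times n}$ be symmetric with $r:=\mathrm{rank}(A)$, and let $\epsilon\ge 0$. Let $S\subseteq\{1,\dots,n\}$ with $|S|=r$ be such that the principal submatrix $A[S]$ is nonsingular, and let $T$ be obtained from $S$ by replacing one element of $S$ by an element of $\{1,\dots,n\}\setminus S$. If $|\det(A[T])|\le(1+\epsilon)|\det(A[S])|$, then $|\det(A[S,T])|\le\sqrt{1+\epsilon}\,|\det(A[S])|$.
   Context: $A[S,T]$ denotes the submatrix of $A$ with row indices $S$ and column indices $T$, and $A[S]:=A[S,S]$ is the principal submatrix with row/column indices $S$ (index sets taken in a fixed order; only absolute values of determinants are involved). *)

(* Defs.v *)
From mathcomp Require Import all_boot all_order all_algebra.
Set Implicit Arguments. Unset Strict Implicit. Unset Printing Implicit Defensive.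
Import Order.TTheory GRing.Theory Num.Theory.
Local Open Scope ring_scope.

(* A[S,T] as a #|S| x #|S| matrix: rows indexed by S, columns by T, each in the
   increasing (enum) order.  Used only when #|T| = #|S|; the default element of
   the nth on T is irrelevant in that case. *)
Definition subA (R : nzRingType) (n : nat) (A : 'M[R]_n) (S T : {set 'I_n})
  : 'M[R]_#|S| :=
  \matrix_(i < #|S|, j < #|S|)
     A (enum_val i) (nth (enum_val i) (enum T) j).

Definition psubA (R : nzRingType) (n : nat) (A : 'M[R]_n) (S : {set 'I_n})
  : 'M[R]_#|S| := subA A S S.

(* Main.v *)
Require Import Defs.
From mathcomp Require Import all_boot all_order all_algebra.
Import Order.TTheory GRing.Theory Num.Theory.
Local Open Scope ring_scope.

Lemma factor_lem (F : fieldType) (n k : nat) (A : 'M[F]_n) (f : 'I_k -> 'I_n) :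
  \rank A = k -> mxsub f f A \in unitmx ->
  A = colsub f A *m invmx (mxsub f f A) *m rowsub f A.
Proof.
move=> rkA uM.
have sub1 : (rowsub f A <= A)%MS by exact: rowsub_sub.
have rkB : (k <= \rank (rowsub f A))%N.
  rewrite -{1}(mxrank_unit uM) mxsubcr.
  have -> : colsub f (rowsub f A) = rowsub f A *m colsub f 1%:M.
    by rewrite mulmx_colsub mulmx1.
  exact: mxrankM_maxl.
have sub2 : (A <= rowsub f A)%MS.
  have [_ <-] := mxrank_leqif_sup sub1.
  by rewrite eqn_leq mxrankS // rkA.
have [D defA] := submxP sub2.
have hC : colsub f A = D *m mxsub f f A.
  by rewrite {1}defA -mulmx_colsub -mxsubcr.
by rewrite hC mulmxK // -defA.
Qed.

Lemma det_cast_sub (R : comNzRingType) (n k1 k2 : nat) (A : 'M[R]_n) (e : k1 = k2)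
  (f : 'I_k1 -> 'I_n) (g : 'I_k2 -> 'I_n) :
  (forall i, f i = g (cast_ord e i)) -> \det (mxsub f f A) = \det (mxsub g g A).
Proof.
subst k2 => h.
by congr (\det _); apply/matrixP => i j; rewrite !mxE !h !cast_ord_id.
Qed.

Theorem lemma2p4 (R : rcfType) (n : nat) (A : 'M[R]_n) (eps : R)
  (S T : {set 'I_n}) (s t : 'I_n) :
  A^T = A -> 0 <= eps ->
  #|S| = \rank A ->
  \det (psubA A S) != 0 ->
  s \in S -> t \notin S -> T = t |: (S :\ s) ->
  `|\det (psubA A T)| <= (1 + eps) * `|\det (psubA A S)| ->
  `|\det (subA A S T)| <= Num.sqrt (1 + eps) * `|\det (psubA A S)|.
Proof.
move=> symA eps0 rkA detS sS tS defT hle.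
have cTS : #|T| = #|S|.
  by rewrite defT cardsU1 in_setD1 (negPf tS) andbF (cardsD1 s S) sS.
pose fS : 'I_#|S| -> 'I_n := enum_val.
pose gT : 'I_#|S| -> 'I_n := fun j => nth s (enum T) j.
have eS : psubA A S = mxsub fS fS A.
  apply/matrixP => i j; rewrite !mxE /fS /enum_val.
  by congr (A _ _); apply: set_nth_default; rewrite -cardE.
have eST : subA A S T = mxsub fS gT A.
  apply/matrixP => i j; rewrite !mxE /gT.
  by congr (A _ _); apply: set_nth_default; rewrite -cardE cTS.
have eT : \det (psubA A T) = \det (mxsub gT gT A).
  rewrite /psubA /subA.
  have -> : (\matrix_(i < #|T|, j < #|T|) A (enum_val i) (nth (enum_val i) (enum T) j))
     = mxsub (enum_val : 'I_#|T| -> 'I_n) enum_val A.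
    apply/matrixP => i j; rewrite !mxE /enum_val.
    by congr (A _ _); apply: set_nth_default; rewrite -cardE.
  apply: (@det_cast_sub _ _ _ _ A cTS) => i /=.
  by rewrite /gT /enum_val /=; apply: set_nth_default; rewrite -cardE.
have uM : mxsub fS fS A \in unitmx by rewrite unitmxE unitfE -eS.
have key := @factor_lem _ _ _ A fS (esym rkA) uM.
have fact : forall k (f g : 'I_k -> 'I_n),
    mxsub f g A = mxsub f fS A *m invmx (mxsub fS fS A) *m mxsub fS g A.
  move=> k f g; rewrite {1}key mxsub_mul -mul_rowsub_mx.
  by rewrite -mxsubrc -mxsubcr.
have dT : \det (psubA A T) = \det (subA A S T) * (\det (psubA A S))^-1 * \det (subA A S T).
  rewrite eT fact !det_mulmx det_inv eS eST.
  have -> : mxsub gT fS A = (mxsub fS gT A)^T by rewrite trmx_mxsub symA.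
  by rewrite det_tr.
set d := \det (subA A S T) in dT *.
set m := \det (psubA A S) in dT hle detS *.
have hsq : `|d| ^+ 2 <= (1 + eps) * `|m| ^+ 2.
  have : `|d| ^+ 2 = `|\det (psubA A T)| * `|m|.
    rewrite dT !normrM normrV ?unitfE //.
    by rewrite [_ * _ * `|d|]mulrAC divfK ?normr_eq0 // expr2.
  move=> ->; rewrite expr2 mulrA ler_wpM2r //.
rewrite -(sqrtr_sqr d) -(sqrtr_sqr m) -sqrtrM; last by rewrite addr_ge0.
rewrite ler_sqrt; last by rewrite mulr_ge0 ?addr_ge0 ?sqr_ge0.
by rewrite !real_normK ?num_real in hsq.
Qed.
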